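(* Let $J=JCK(Z,\delta)$. The restriction map $\mathrm{Der}(J)_{\bar0}\to\mathrm{Der}(J_{\bar0})$, $\partial\mapsto\partial|_{J_{\bar0}}$, is injective.
   Context: Let $\mathbb F$ be a field of characteristic $\neq 2$, $Z$ a unital commutative associative $\mathbb F$-algebra, and $\delta$ a derivation of $Z$ such that $Z\delta(Z)=Z$ (the $\mathbb F$-span of all products $f\delta(g)$, $f,g\in Z$, is $Z$). The Cheng-Kac Jordan superalgebra $J=JCK(Z,\delta)=J_{\bar0}\oplus J_{\bar1}$ is defined as follows: $J_{\bar0}=Z1\oplus Zw_1\oplus Zw_2\oplus Zw_3$ and $J_{\bar1}=Zx\oplus Zx_1\oplus Zx_2\oplus Zx_3$ are free $Z$-modules of rank 4; $J_{\bar0}$ is the $Z$-algebra $(\mathbb F1\oplus\mathbb Fw_1\oplus\mathbb Fw_2\oplus\mathbb Fw_3)\otimes_{\mathbb F}Z$ with $1$ the identity, $w_1^2=w_2^2=1$, $w_3^2=-1$, $w_iw_j=0$ for $i\ne j$. For $f,g\in Z$ and $i,j\in\{1,2,3\}$ the remaining products are: $f(gx)=(fg)x$, $f(gx_j)=(fg)x_j$, $(fw_i)(gx)=(\delta(f)g)x_i$, $(fw_i)(gx_j)=-(fg)x_{i\times j}$, $(fx)(gx)=\delta(f)g-f\delta(g)$, $(fx)(gx_j)=-(fg)w_j$, $(fx_i)(gx)=(fg)w_i$, $(fx_i)(gx_j)=0$, extended by supercommutativity ($ab=(-1)^{|a||b|}ba$), where $x_{1\times2}=-x_{2\times1}=x_3$,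 $x_{1\times3}=-x_{3\times1}=x_2$, $x_{3\times2}=-x_{2\times3}=x_1$, $x_{i\times i}=0$. Derivations are super derivations: homogeneous linear $d$ with $d(ab)=d(a)b+(-1)^{|d||a|}ad(b)$. *)

(* Defs.v *)
From HB Require Import structures.
From mathcomp Require Import all_boot all_order all_algebra.
Set Implicit Arguments. Unset Strict Implicit. Unset Printing Implicit Defensive.
Import GRing.Theory.
Local Open Scope ring_scope.

(* Elements of J = JCK(Z,delta): coordinates w.r.t. the Z-basis
   1, w1, w2, w3 (even part J_0) and x, x1, x2, x3 (odd part J_1). *)
Record JCK (Z : Type) := mkJ {
  j1 : Z; jw1 : Z; jw2 : Z; jw3 : Z;
  jx : Z; jx1 : Z; jx2 : Z; jx3 : Z
}.

Section JCKdef.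
Variables (F : fieldType) (Z : comAlgType F).

Definition addJ (a b : JCK Z) : JCK Z :=
  mkJ (j1 a + j1 b) (jw1 a + jw1 b) (jw2 a + jw2 b) (jw3 a + jw3 b)
      (jx a + jx b) (jx1 a + jx1 b) (jx2 a + jx2 b) (jx3 a + jx3 b).

Definition scaleJ (k : F) (a : JCK Z) : JCK Z :=
  mkJ (k *: j1 a) (k *: jw1 a) (k *: jw2 a) (k *: jw3 a)
      (k *: jx a) (k *: jx1 a) (k *: jx2 a) (k *: jx3 a).

Definition is_evenJ (a : JCK Z) : Prop :=
  jx a = 0 /\ jx1 a = 0 /\ jx2 a = 0 /\ jx3 a = 0.
Definition is_oddJ (a : JCK Z) : Prop :=
  j1 a = 0 /\ jw1 a = 0 /\ jw2 a = 0 /\ jw3 a = 0.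

Definition is_derivationZ (delta : Z -> Z) : Prop :=
  (forall f g, delta (f + g) = delta f + delta g) /\
  (forall (k : F) f, delta (k *: f) = k *: delta f) /\
  (forall f g, delta (f * g) = delta f * g + f * delta g).

(* Z delta(Z) = Z : every element is an F-linear combination (equivalently,
   a finite sum, since Z is an F-algebra) of products f * delta g. *)
Definition ZdeltaZ_full (delta : Z -> Z) : Prop :=
  forall z : Z, exists s : seq (Z * Z), z = \sum_(p <- s) p.1 * delta p.2.

(* The product of JCK(Z, delta), obtained from the defining table by
   F-bilinearity and supercommutativity.  Writing a = e + o, b = e' + o'
   with e = c + sum u_i w_i, o = p x + sum q_j x_j (and primes for b):
     e e'  = c c' + u1 u1' + u2 u2' - u3 u3' + sum (c u_i' + u_i c') w_i
     e o'  = c p' x + sum_j c q_j' x_j + sum_i delta(u_i) p' x_i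
             - sum_{i,j} u_i q_j' x_{i x j}
     o e'  = e' o   (supercommutativity, one factor even)
     o o'  = delta(p) p' - p delta(p') + sum_j (q_j p' - p q_j') w_j. *)
Definition mulJ (delta : Z -> Z) (a b : JCK Z) : JCK Z :=
  let c := j1 a in let u1 := jw1 a in let u2 := jw2 a in let u3 := jw3 a in
  let p := jx a in let q1 := jx1 a in let q2 := jx2 a in let q3 := jx3 a in
  let c' := j1 b in let u1' := jw1 b in let u2' := jw2 b in let u3' := jw3 b in
  let p' := jx b in let q1' := jx1 b in let q2' := jx2 b in let q3' := jx3 b in
  mkJ
    (* 1 *)
    (c * c' + u1 * u1' + u2 * u2' - u3 * u3'
       + (delta p * p' - p * delta p'))
    (* w1 *) (c * u1' + u1 * c' + (q1 * p' - p * q1'))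
    (* w2 *) (c * u2' + u2 * c' + (q2 * p' - p * q2'))
    (* w3 *) (c * u3' + u3 * c' + (q3 * p' - p * q3'))
    (* x *)  (c * p' + c' * p)
    (* x1 *) (c * q1' + delta u1 * p' + (u2 * q3' - u3 * q2')
              + c' * q1 + delta u1' * p + (u2' * q3 - u3' * q2))
    (* x2 *) (c * q2' + delta u2 * p' + (u3 * q1' - u1 * q3')
              + c' * q2 + delta u2' * p + (u3' * q1 - u1' * q3))
    (* x3 *) (c * q3' + delta u3 * p' + (u2 * q1' - u1 * q2')
              + c' * q3 + delta u3' * p + (u2' * q1 - u1' * q2)).

(* Even (super)derivations of J = JCK(Z, delta): F-linear, parity
   preserving, and Leibniz (no sign since |d| = 0). *)
Definition is_even_derJ (delta : Z -> Z) (d : JCK Z -> JCK Z) : Prop :=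
  (forall a b, d (addJ a b) = addJ (d a) (d b)) /\
  (forall (k : F) a, d (scaleJ k a) = scaleJ k (d a)) /\
  (forall a, is_evenJ a -> is_evenJ (d a)) /\
  (forall a, is_oddJ a -> is_oddJ (d a)) /\
  (forall a b, d (mulJ delta a b) = addJ (mulJ delta (d a) b) (mulJ delta a (d b))).

End JCKdef.

(* Main.v *)
Require Import Defs.
From HB Require Import structures.
From mathcomp Require Import all_boot all_order all_algebra.
From Stdlib Require Import Ring.
Import GRing.Theory.
Local Open Scope ring_scope.

Section Main.
Variables (F : fieldType) (Z : comAlgType F).

Definition zadd (x y : Z) : Z := x + y.
Definition zmul (x y : Z) : Z := x * y.
Definition zopp (x : Z) : Z := - x.
Definition zsub (x y : Z) : Z := zadd x (zopp y).
Definition z0 : Z := 0.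
Definition z1 : Z := 1.
Lemma Zrt : ring_theory z0 z1 zadd zmul zsub zopp eq.
Proof. rewrite /zadd/zmul/zsub/zopp/zadd/z0/z1.
split=> //; [exact: add0r|exact: addrC|exact: addrA|exact: mul1r|exact: mulrC|exact: mulrA|exact: mulrDl|exact: subrr]. Qed.
Add Ring Zr : Zrt.
Lemma zaddE (x y : Z) : x + y = zadd x y. Proof. by []. Qed.
Lemma zmulE (x y : Z) : x * y = zmul x y. Proof. by []. Qed.
Lemma zoppE (x : Z) : - x = zopp x. Proof. by []. Qed.
Lemma z0E : 0 = z0 :> Z. Proof. by []. Qed.
Lemma z1E : 1 = z1 :> Z. Proof. by []. Qed.
Ltac zring := match goal with |- ?a = ?b => change (@eq Z a b) end;
  rewrite ?zaddE ?zmulE ?zoppE ?z0E ?z1E; ring.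

Variable delta : Z -> Z.
Hypothesis Hd : is_derivationZ delta.

Lemma dD x y : delta (x + y) = delta x + delta y.
Proof. by case: Hd. Qed.
Lemma dM x y : delta (x * y) = delta x * y + x * delta y.
Proof. by case: Hd => _ []. Qed.
Lemma d0 : delta 0 = 0.
Proof. have := dD 0 0; rewrite addr0 => /(congr1 (fun y => y - delta 0)).
by rewrite subrr addrK. Qed.
Lemma dN x : delta (- x) = - delta x.
Proof. apply/eqP; rewrite -subr_eq0 opprK -dD addNr d0 //. Qed.
Lemma dB x y : delta (x - y) = delta x - delta y.
Proof. by rewrite dD dN. Qed.
Lemma dl1 : delta 1 = 0.
Proof. have := dM 1 1; rewrite !mul1r mulr1 => /(congr1 (fun y => y - delta 1)).
by rewrite subrr addrK. Qed.

Hypothesis Hf : ZdeltaZ_full delta.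

Lemma full0 z : (forall f, delta f * z = 0) -> z = 0.
Proof.
move=> h; have [s Hs] := Hf 1.
rewrite -[z]mulr1 Hs big_distrr /= big1 // => p _.
by rewrite mulrCA [z * _]mulrC h mulr0.
Qed.

Notation M := (mulJ delta).
Definition J0 : JCK Z := mkJ 0 0 0 0 0 0 0 0.
Definition G (c : Z) : JCK Z := mkJ c 0 0 0 0 0 0 0.
Definition X : JCK Z := mkJ 0 0 0 0 1 0 0 0.
Definition X1 : JCK Z := mkJ 0 0 0 0 0 1 0 0.
Definition X2 : JCK Z := mkJ 0 0 0 0 0 0 1 0.
Definition X3 : JCK Z := mkJ 0 0 0 0 0 0 0 1.
Definition W1 (f : Z) : JCK Z := mkJ 0 f 0 0 0 0 0 0.
Definition W2 (f : Z) : JCK Z := mkJ 0 0 f 0 0 0 0 0.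
Definition W3 (f : Z) : JCK Z := mkJ 0 0 0 f 0 0 0 0.

Ltac jsimpl := rewrite /mulJ /addJ /=; rewrite ?d0 ?dl1 ?dB ?dD ?dM ?d0 ?dl1.

Lemma MG c v : M (G c) v = mkJ (c * j1 v) (c * jw1 v) (c * jw2 v) (c * jw3 v)
   (c * jx v) (c * jx1 v) (c * jx2 v) (c * jx3 v).
Proof. case: v => *; jsimpl; f_equal; zring. Qed.

Lemma MJ0 a : M a J0 = J0.
Proof. case: a => *; rewrite /J0; jsimpl; f_equal; zring. Qed.
Lemma M0J a : M J0 a = J0.
Proof. case: a => *; rewrite /J0; jsimpl; f_equal; zring. Qed.
Lemma add0J a : addJ J0 a = a.
Proof. case: a => *; rewrite /J0 /addJ /=; f_equal; zring. Qed.

Variables d1 d2 : JCK Z -> JCK Z.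
Hypotheses (D1 : is_even_derJ delta d1) (D2 : is_even_derJ delta d2).
Hypothesis Heq : forall a : JCK Z, is_evenJ a -> d1 a = d2 a.

Definition Dm a : JCK Z := @mkJ Z (j1 (d1 a) - j1 (d2 a)) (jw1 (d1 a) - jw1 (d2 a))
  (jw2 (d1 a) - jw2 (d2 a)) (jw3 (d1 a) - jw3 (d2 a))
  (jx (d1 a) - jx (d2 a)) (jx1 (d1 a) - jx1 (d2 a))
  (jx2 (d1 a) - jx2 (d2 a)) (jx3 (d1 a) - jx3 (d2 a)).

Lemma DmM a b : Dm (M a b) = addJ (M (Dm a) b) (M a (Dm b)).
Proof.
have [_ [_ [_ [_ L1]]]] := D1; have [_ [_ [_ [_ L2]]]] := D2.
rewrite /Dm L1 L2.
case: (d1 a) => *; case: (d2 a) => *; case: (d1 b) => *; case: (d2 b) => *.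
case: a => *; case: b => *.
jsimpl; f_equal; zring.
Qed.

Lemma DmD a b : Dm (addJ a b) = addJ (Dm a) (Dm b).
Proof.
have [L1 _] := D1; have [L2 _] := D2.
rewrite /Dm L1 L2.
case: (d1 a) => *; case: (d2 a) => *; case: (d1 b) => *; case: (d2 b) => *.
rewrite /addJ /=; f_equal; zring.
Qed.

Lemma Dm_even a : is_evenJ a -> Dm a = J0.
Proof. by move=> h; rewrite /Dm Heq // !subrr. Qed.

Lemma Dm_odd a : is_oddJ a -> is_oddJ (Dm a).
Proof.
move=> h; have [_ [_ [_ [O1 _]]]] := D1; have [_ [_ [_ [O2 _]]]] := D2.
have [a1 [a2 [a3 a4]]] := O1 a h; have [b1 [b2 [b3 b4]]] := O2 a h.
by rewrite /is_oddJ /Dm /= a1 a2 a3 a4 b1 b2 b3 b4 !subrr.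
Qed.

Lemma Dm0 a : Dm a = J0 -> d1 a = d2 a.
Proof.
rewrite /Dm; case: (d1 a) => a1 a2 a3 a4 a5 a6 a7 a8.
case: (d2 a) => b1 b2 b3 b4 b5 b6 b7 b8 /= [] h1 h2 h3 h4 h5 h6 h7 h8.
by rewrite (subr0_eq h1) (subr0_eq h2) (subr0_eq h3) (subr0_eq h4) (subr0_eq h5) (subr0_eq h6) (subr0_eq h7) (subr0_eq h8).
Qed.

Lemma even_left a b : is_evenJ a -> Dm (M a b) = M a (Dm b).
Proof. by move=> h; rewrite DmM Dm_even // M0J add0J. Qed.

Lemma G_even c : is_evenJ (G c). Proof. by rewrite /is_evenJ. Qed.

Hypothesis H2 : (2 \notin [pchar F])%N.

Lemma half (x : Z) : x + x = 0 -> x = 0.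
Proof.
move=> h.
have n2 : (2%:R : F) != 0 by move: H2; rewrite inE.
have : (2%:R : F) *: x = 0 by rewrite scaler_nat mulr2n.
move=> /(congr1 (fun y => (2%:R : F)^-1 *: y)).
by rewrite scalerA mulVf // scale1r scaler0.
Qed.

Ltac dsimpl := rewrite ?dB ?dD ?dM ?d0 ?dl1 ?dB ?dD ?dM ?d0 ?dl1.
Ltac evenT := rewrite /is_evenJ /mulJ /=; dsimpl; (repeat split); zring.

Lemma DmX : Dm X = J0.
Proof.
have vo := Dm_odd X (ltac:(by rewrite /is_oddJ)).
have hp : forall g, addJ (M (Dm X) (M (G g) X)) (M X (M (G g) (Dm X))) = J0.
  move=> g; rewrite -even_left ?G_even // -DmM; apply: Dm_even; rewrite MG; evenT.
have hw : forall W, is_evenJ W -> is_evenJ (M W X) -> M W (Dm X) = J0.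
  by move=> W hW hWX; rewrite -even_left // Dm_even.
move: vo hp hw; case: (Dm X) => c u1 u2 u3 p q1 q2 q3 [/= -> [-> [-> ->]]] hp hw.
have Hp : p = 0.
  apply: full0 => f; rewrite mulrC.
  have := hp f; rewrite !MG.
  move/(congr1 (@j1 Z)) => /= E.
  rewrite ?dB ?dD ?dM ?d0 ?dl1 ?dB ?dD ?dM ?d0 ?dl1 in E.
  apply: half; rewrite -oppr0 -E; zring.
subst p.
have E1 := hw (W1 1) (ltac:(by rewrite /is_evenJ)) (ltac:(evenT)).
have E2 := hw (W2 1) (ltac:(by rewrite /is_evenJ)) (ltac:(evenT)).
have e3 := congr1 (@jx2 Z) E1; have e2 := congr1 (@jx3 Z) E1.
have e3' := congr1 (@jx1 Z) E2; have e1 := congr1 (@jx3 Z) E2.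
move: e1 e2 e3 e3'; rewrite /mulJ /=; dsimpl => e1 e2 e3 e3'.
have -> : q1 = 0.
 rewrite -e1. match goal with |- ?a = ?b => change (@eq Z a b) end; rewrite ?zaddE ?zmulE ?zoppE ?z0E ?z1E. ring.
have -> : q2 = 0 by rewrite -oppr0 -e2; zring.
have -> : q3 = 0 by rewrite -e3'; zring.
by [].
Qed.

Lemma Dm_scal c v : Dm (M (G c) v) = M (G c) (Dm v).
Proof. exact: even_left (G_even c). Qed.

Lemma killG v : (forall f, M (G (delta f)) v = J0) -> v = J0.
Proof.
case: v => a1 a2 a3 a4 a5 a6 a7 a8 h.
have k : forall (pr : JCK Z -> Z) c, (forall f, pr (M (G (delta f)) (mkJ a1 a2 a3 a4 a5 a6 a7 a8)) = 0) ->
   (forall f, pr (M (G (delta f)) (mkJ a1 a2 a3 a4 a5 a6 a7 a8)) = delta f * c) -> c = 0.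
  by move=> pr c h1 h2; apply: full0 => f; rewrite -h2 h1.
rewrite /J0; f_equal.
- apply: (k (@j1 Z)) => f; [by rewrite h | by rewrite MG].
- apply: (k (@jw1 Z)) => f; [by rewrite h | by rewrite MG].
- apply: (k (@jw2 Z)) => f; [by rewrite h | by rewrite MG].
- apply: (k (@jw3 Z)) => f; [by rewrite h | by rewrite MG].
- apply: (k (@jx Z)) => f; [by rewrite h | by rewrite MG].
- apply: (k (@jx1 Z)) => f; [by rewrite h | by rewrite MG].
- apply: (k (@jx2 Z)) => f; [by rewrite h | by rewrite MG].
- apply: (k (@jx3 Z)) => f; [by rewrite h | by rewrite MG].
Qed.

Lemma DmW (W : JCK Z) : is_evenJ W -> Dm (M W X) = J0.
Proof. by move=> hW; rewrite even_left // DmX MJ0. Qed.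

Lemma DmX1 : Dm X1 = J0.
Proof.
apply: killG => f; rewrite -Dm_scal.
have -> : M (G (delta f)) X1 = M (W1 f) X by rewrite /mulJ /=; dsimpl; f_equal; zring.
by apply: DmW; rewrite /is_evenJ.
Qed.
Lemma DmX2 : Dm X2 = J0.
Proof.
apply: killG => f; rewrite -Dm_scal.
have -> : M (G (delta f)) X2 = M (W2 f) X by rewrite /mulJ /=; dsimpl; f_equal; zring.
by apply: DmW; rewrite /is_evenJ.
Qed.
Lemma DmX3 : Dm X3 = J0.
Proof.
apply: killG => f; rewrite -Dm_scal.
have -> : M (G (delta f)) X3 = M (W3 f) X by rewrite /mulJ /=; dsimpl; f_equal; zring.
by apply: DmW; rewrite /is_evenJ.
Qed.

Lemma all_eq a : d1 a = d2 a.
Proof.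
apply: Dm0.
have Ea : addJ (mkJ (j1 a) (jw1 a) (jw2 a) (jw3 a) 0 0 0 0)
   (addJ (M (G (jx a)) X) (addJ (M (G (jx1 a)) X1) (addJ (M (G (jx2 a)) X2) (M (G (jx3 a)) X3)))) = a.
  rewrite !MG; case: a => *; rewrite /addJ /=; f_equal; zring.
rewrite -Ea !DmD Dm_even ?(ltac:(by rewrite /is_evenJ)) // !Dm_scal DmX DmX1 DmX2 DmX3 !MJ0 !add0J //.
Qed.

End Main.

Theorem mainTheorem3 (F : fieldType) (Z : comAlgType F) (delta : Z -> Z) :
  (2 \notin [pchar F])%N ->
  is_derivationZ delta ->
  ZdeltaZ_full delta ->
  forall d1 d2 : JCK Z -> JCK Z,
    is_even_derJ delta d1 -> is_even_derJ delta d2 ->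
    (forall a : JCK Z, is_evenJ a -> d1 a = d2 a) ->
    forall a : JCK Z, d1 a = d2 a.
Proof.
move=> h2 hd hf d1 d2 D1 D2 heq a.
exact: (@all_eq F Z delta hd hf d1 d2 D1 D2 heq h2 a).
Qed.
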